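(* Let $q\ge 7$ be a prime power, $m=\lceil (q+1)/2\rceil$, and suppose $\mathcal{H}=\{h_1,\dots,h_m\}\subseteq\mathbb{F}_q^3$ is a short covering of $\mathbb{F}_q^3$. Then: (1) some vector of $\mathcal{H}$ has weight $3$; (2) for each $j\in\{1,2,3\}$ there is $h_k\in\mathcal{H}$ with $\pi_j(h_k)=0$; (3) $\mathcal{H}$ is $\mathbb{F}_q$-equivalent to a set of one of the following two forms: $\mathcal{H}_1=\{(1,1,1),(0,*,* ),( *,0,* ),( *,*,0),h_5,\dots,h_m\}$ or $\mathcal{H}_2=\{(1,1,1),(0,*,* ),( *,0,0),h_4,\dots,h_m\}$, where each $*$ denotes an arbitrary element of $\mathbb{F}_q$ and the $h_i$ denote arbitrary vectors of $\mathbb{F}_q^3$.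
   Context: $\mathbb{F}_q$ is the finite field with $q$ elements. Hamming distance $d(u,v)=|\{i:u_i\ne v_i\}|$; $B(u)=\{v:d(u,v)\le1\}$; $E(u)=\bigcup_{\lambda\in\mathbb{F}_q}B(\lambda u)$. $\mathcal{H}\subseteq\mathbb{F}_q^3$ is a short covering of $\mathbb{F}_q^3$ if $\bigcup_{h\in\mathcal{H}}E(h)=\mathbb{F}_q^3$. The weight of $u$ is $\omega(u)=|\{i:u_i\ne0\}|$, and $\pi_j(u_1,u_2,u_3)=u_j$. Two subsets of $\mathbb{F}_q^3$ are $\mathbb{F}_q$-equivalent if one is mapped onto the other by a map of the form $(u_1,u_2,u_3)\mapsto(a_1u_{\varphi(1)},a_2u_{\varphi(2)},a_3u_{\varphi(3)})$ with $\varphi$ a permutation of $\{1,2,3\}$ and $a_1,a_2,a_3\in\mathbb{F}_q^*$ (the action of the wreath product of $\mathbb{F}_q^*$ by $S_3$). *)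

(* Defs.v *)
From HB Require Import structures.
From mathcomp Require Import all_boot all_order all_algebra all_fingroup.
Set Implicit Arguments. Unset Strict Implicit. Unset Printing Implicit Defensive.
Import GRing.Theory.
Local Open Scope ring_scope.

(* Vectors of F_q^3 are row vectors 'rV[F]_3; coordinates indexed by 'I_3
   (index 0,1,2 correspond to the paper's 1,2,3). *)

Section Defs.
Variable F : finFieldType.

Definition hamming (u v : 'rV[F]_3) : nat := #|[set i : 'I_3 | u 0 i != v 0 i]|.

Definition weight (u : 'rV[F]_3) : nat := #|[set i : 'I_3 | u 0 i != 0]|.

Definition ball1 (u : 'rV[F]_3) : {set 'rV[F]_3} := [set v | (hamming u v <= 1)%N].

Definition Eext (u : 'rV[F]_3) : {set 'rV[F]_3} := \bigcup_(l : F) ball1 (l *: u).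

Definition short_covering (H : {set 'rV[F]_3}) : Prop :=
  \bigcup_(h in H) Eext h = [set: 'rV[F]_3].

Definition monomial_map (s : 'S_3) (a : 'I_3 -> F) (u : 'rV[F]_3) : 'rV[F]_3 :=
  \row_(i < 3) (a i * u 0 (s i)).

Definition Fq_equivalent (H H' : {set 'rV[F]_3}) : Prop :=
  exists (s : 'S_3) (a : 'I_3 -> F),
    (forall i, a i != 0) /\ [set monomial_map s a h | h in H] = H'.

Definition all_ones : 'rV[F]_3 := \row_(i < 3) 1.

Definition form1 (H' : {set 'rV[F]_3}) : Prop :=
  exists h1 h2 h3 h4,
    [/\ [/\ h1 \in H', h2 \in H', h3 \in H' & h4 \in H'],
        uniq [:: h1; h2; h3; h4],
        h1 = all_ones &
        [/\ h2 0 0 = 0, h3 0 1 = 0 & h4 0 2 = 0]].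

Definition form2 (H' : {set 'rV[F]_3}) : Prop :=
  exists h1 h2 h3,
    [/\ [/\ h1 \in H', h2 \in H' & h3 \in H'],
        uniq [:: h1; h2; h3],
        h1 = all_ones &
        [/\ h2 0 0 = 0, h3 0 1 = 0 & h3 0 2 = 0]].

End Defs.

(* Main.v *)
Require Import Defs.
From HB Require Import structures.
From mathcomp Require Import all_boot all_order all_algebra all_fingroup.
From mathcomp Require Import ring zify.
Import GRing.Theory.
Local Open Scope ring_scope.

Section Aux.
Variable F : finFieldType.
Implicit Types (u v w h : 'rV[F]_3).

Definition i0 : 'I_3 := @Ordinal 3 0 isT.
Definition i1 : 'I_3 := @Ordinal 3 1 isT.
Definition i2 : 'I_3 := @Ordinal 3 2 isT.

Lemma e0 : (0 : 'I_3) = i0. Proof. by apply/val_inj. Qed.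
Lemma e1 : (1 : 'I_3) = i1. Proof. by apply/val_inj. Qed.
Lemma e2 : (2 : 'I_3) = i2. Proof. by apply/val_inj. Qed.

Lemma ord3 (l : 'I_3) : l = i0 \/ l = i1 \/ l = i2.
Proof.
case: l => [[|[|[|n]]] Hn].
- by left; apply/val_inj.
- by right; left; apply/val_inj.
- by right; right; apply/val_inj.
- by [].
Qed.

Lemma card_bigcup_le (I T : finType) (P : pred I) (G : I -> {set T}) :
  (#|\bigcup_(i | P i) G i| <= \sum_(i | P i) #|G i|)%N.
Proof.
elim/big_rec2: _ => [|i A n _ IH]; first by rewrite cards0.
apply: leq_trans (leq_card_setU _ _).1 _.
by rewrite leq_add2l.
Qed.

Lemma ham_eq u v (i j : 'I_3) : (hamming u v <= 1)%N -> u 0 j != v 0 j ->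
  i != j -> u 0 i = v 0 i.
Proof.
move=> Hh Hj Hij; apply/eqP; apply: (contraTT _ Hh) => Hi.
rewrite -ltnNge /hamming.
have: [set i; j] \subset [set l | u 0 l != v 0 l].
  by apply/subsetP => l; rewrite !inE => /orP[] /eqP->; rewrite ?Hi ?Hj.
by move/subset_leq_card; rewrite cards2 Hij.
Qed.

Arguments ham_eq {u v i j}.

Lemma inEext v h : v \in Eext h -> exists l, (hamming (l *: h) v <= 1)%N.
Proof. by rewrite /Eext => /bigcupP[l _]; rewrite inE => Hl; exists l. Qed.

Lemma cov (H : {set 'rV[F]_3}) : short_covering H ->
  forall v, exists2 h, h \in H & v \in Eext h.
Proof.
move=> Hc v; have: v \in [set: 'rV[F]_3] by rewrite inE.
by rewrite -Hc => /bigcupP[h hH vh]; exists h.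
Qed.

Arguments cov {H}.

Lemma rel h v w (j i k : 'I_3) : i != j -> k != j -> h 0 j = 0 ->
  v 0 j != 0 -> w 0 j != 0 -> v \in Eext h -> w \in Eext h ->
  v 0 i * w 0 k = w 0 i * v 0 k.
Proof.
move=> ij kj hj vj wj /inEext[l Hl] /inEext[m Hm].
have dv : (l *: h) 0 j != v 0 j by rewrite mxE hj mulr0 eq_sym.
have dw : (m *: h) 0 j != w 0 j by rewrite mxE hj mulr0 eq_sym.
rewrite -(ham_eq Hl dv ij) -(ham_eq Hl dv kj) -(ham_eq Hm dw ij)
        -(ham_eq Hm dw kj) !mxE.
ring.
Qed.

Arguments rel {h v w j i k}.

Lemma zero_coord h : weight h != 3%N -> exists j, h 0 j = 0.
Proof.
move=> Hw; case: (pickP (fun j => h 0 j == 0)) => [j /eqP|nz]; first by exists j.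
exfalso; move/eqP: Hw; apply; rewrite /weight.
have ->: [set i | h 0 i != 0] = setT by apply/setP=> i; rewrite !inE nz.
by rewrite cardsT card_ord.
Qed.

Arguments zero_coord {h}.

Lemma w3_nz h (i : 'I_3) : weight h = 3%N -> h 0 i != 0.
Proof.
move=> Hw; apply/negP => /eqP hi.
have: [set l | h 0 l != 0] \subset [set~ i].
  by apply/subsetP => l; rewrite !inE; apply: contra => /eqP ->; rewrite hi.
move/subset_leq_card; rewrite cardsC1 card_ord -/(weight h) Hw.
by [].
Qed.

Lemma arith q m : (7 <= q)%N -> (m * 2 <= q + 2)%N -> (q.-1 * q.-1 <= m * q)%N -> False.
Proof. move=> *; nia. Qed.

Lemma arith2 q m : (7 <= q)%N -> (m * 2 <= q + 2)%N -> (q.-1 <= m)%N -> False.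
Proof. move=> *; lia. Qed.

Lemma part1 (H : {set 'rV[F]_3}) :
  (7 <= #|F|)%N -> #|H| = ((#|F| + 2) %/ 2)%N -> short_covering H ->
  exists2 h, h \in H & weight h = 3%N.
Proof.
move=> q7 Hm Hc.
case: (pickP [pred h | (h \in H) && (weight h == 3%N)]) =>
  [h /andP[hH /eqP w3] | no]; first by exists h.
exfalso.
pose T := setX [set~ (0:F)] [set~ (0:F)].
pose w (p : F * F) : 'rV[F]_3 :=
  \row_(l < 3) (if (l : nat) == 0%N then 1 else if (l : nat) == 1%N then p.1 else p.2).
have w0 p : w p 0 i0 = 1 by rewrite mxE.
have w1 p : w p 0 i1 = p.1 by rewrite mxE.
have w2 p : w p 0 i2 = p.2 by rewrite mxE.
have cover : T \subset \bigcup_(h in H) [set p in T | w p \in Eext h].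
  apply/subsetP => p pT; have [h hH ph] := cov Hc (w p).
  by apply/bigcupP; exists h => //; rewrite inE pT.
have bound h : h \in H -> (#|[set p in T | w p \in Eext h]| <= #|F|)%N.
  move=> hH.
  have Hw : weight h != 3%N by move: (no h); rewrite /= hH /= => ->.
  have [j hj] := zero_coord Hw.
  set Th := [set p in T | w p \in Eext h].
  have Tnz p : p \in T -> (p.1 != 0) && (p.2 != 0).
    by rewrite inE !in_setC1.
  have relp (i k : 'I_3) p p' : i != j -> k != j -> p \in Th -> p' \in Th ->
      w p 0 i * w p' 0 k = w p' 0 i * w p 0 k.
    move=> ij kj; rewrite !inE => /andP[pT Hp] /andP[p'T Hp'].
    have nzj q : (q.1 != 0) && (q.2 != 0) -> w q 0 j != 0.
      move/andP=> [n1 n2].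
      by case: (ord3 j) => [->|[->|->]]; rewrite ?w0 ?w1 ?w2 ?oner_eq0.
    exact: (rel ij kj hj (nzj _ pT) (nzj _ p'T) Hp Hp').
  have fin (f : F * F -> F) : {in Th &, injective f} -> (#|Th| <= #|F|)%N.
    by move=> inj; rewrite -(card_in_imset inj); apply: max_card.
  have Th1 p : p \in Th -> p.1 != 0.
    by rewrite inE => /andP[/Tnz/andP[]].
  case: (ord3 j) => [E|[E|E]]; subst j.
  - apply: (fin fst) => [[x y]] [x' y'] Hp Hp' /= e; subst x'.
    have := relp i1 i2 _ _ isT isT Hp Hp'; rewrite !w1 !w2 /= => /mulfI E.
    by rewrite (E (Th1 _ Hp)).
  - apply: (fin fst) => [[x y]] [x' y'] Hp Hp' /= e; subst x'.
    by have := relp i0 i2 _ _ isT isT Hp Hp'; rewrite !w0 !w2 /= !mul1r => ->.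
  - apply: (fin snd) => [[x y]] [x' y'] Hp Hp' /= e; subst y'.
    by have := relp i0 i1 _ _ isT isT Hp Hp'; rewrite !w0 !w1 /= !mul1r => ->.
have := subset_leq_card cover.
move/leq_trans/(_ (card_bigcup_le _ _ _ _)).
have Hs : (\sum_(h in H) #|[set p in T | w p \in Eext h]| <= \sum_(h in H) #|F|)%N.
  by apply: leq_sum.
move/leq_trans/(_ Hs); rewrite sum_nat_const.
rewrite cardsX cardsC1 => Hle.
apply: (@arith #|F| #|H| q7 _ Hle); rewrite Hm; exact: leq_divM.
Qed.

Lemma cov_line h v (j i k : 'I_3) : i != j -> k != j -> i != k ->
  (h == 0) || (h 0 j != 0) -> v 0 j = 0 -> v 0 i != 0 -> v 0 k != 0 ->
  v \in Eext h -> exists l, v 0 i = l * h 0 i /\ v 0 k = l * h 0 k.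
Proof.
move=> ij kj ik Hh vj vi vk /inEext[l Hl]; exists l.
case: (eqVneq ((l *: h) 0 j) (v 0 j)) => Ej.
- exfalso.
  have all0 m : (l *: h) 0 m = 0.
    move: Ej; rewrite !mxE vj.
    case/orP: Hh => [/eqP -> _|hj]; first by rewrite mxE mulr0.
    by move/eqP; rewrite mulf_eq0 (negPf hj) orbF => /eqP ->; rewrite mul0r.
  have di : (l *: h) 0 i != v 0 i by rewrite all0 eq_sym.
  have ki : k != i by rewrite eq_sym.
  have := ham_eq Hl di ki; rewrite all0 => E.
  by move: vk; rewrite -E eqxx.
- by rewrite -(ham_eq Hl Ej ij) -(ham_eq Hl Ej kj) !mxE.
Qed.

Arguments cov_line {h v j i k}.

Lemma part2 (H : {set 'rV[F]_3}) (j i k : 'I_3) : i != j -> k != j -> i != k ->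
  (7 <= #|F|)%N -> #|H| = ((#|F| + 2) %/ 2)%N -> short_covering H ->
  exists2 h, h \in H & (h != 0) && (h 0 j == 0).
Proof.
move=> ij kj ik q7 Hm Hc.
case: (pickP [pred h | (h \in H) && ((h != 0) && (h 0 j == 0))]) =>
  [h /andP[hH E]|no]; first by exists h.
exfalso.
pose S := [set~ (0:F)].
pose vy (y : F) : 'rV[F]_3 := \row_l (if l == j then 0 else if l == i then 1 else y).
have ki : k != i by rewrite eq_sym.
have vj y : vy y 0 j = 0 by rewrite mxE eqxx.
have vi y : vy y 0 i = 1 by rewrite mxE (negPf ij) eqxx.
have vk y : vy y 0 k = y by rewrite mxE (negPf kj) (negPf ki).
have cover : S \subset \bigcup_(h in H) [set y in S | vy y \in Eext h].
  apply/subsetP => y yS; have [h hH ph] := cov Hc (vy y).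
  by apply/bigcupP; exists h => //; rewrite inE yS.
have bound h : h \in H -> (#|[set y in S | vy y \in Eext h]| <= 1)%N.
  move=> hH.
  have Hh : (h == 0) || (h 0 j != 0).
    by move: (no h); rewrite /= hH /= => /negbT; rewrite negb_and negbK.
  apply/card_le1_eqP => y y'; rewrite !inE => /andP[ny Hy] /andP[ny' Hy'].
  have vin z : vy z 0 i != 0 by rewrite vi oner_eq0.
  have vkn z : z != 0 -> vy z 0 k != 0 by rewrite vk.
  have [l [Li Lk]] := cov_line ij kj ik Hh (vj y) (vin y) (vkn y ny) Hy.
  have [l' [Li' Lk']] := cov_line ij kj ik Hh (vj y') (vin y') (vkn y' ny') Hy'.
  rewrite vi in Li; rewrite vi in Li'; rewrite vk in Lk; rewrite vk in Lk'.
  have : y * (l' * h 0 i) = y' * (l * h 0 i) by rewrite Lk Lk'; ring.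
  by rewrite -Li -Li' !mulr1.
have := subset_leq_card cover.
move/leq_trans/(_ (card_bigcup_le _ _ _ _)).
have Hs : (\sum_(h in H) #|[set y in S | vy y \in Eext h]| <= \sum_(h in H) 1)%N.
  by apply: leq_sum.
move/leq_trans/(_ Hs); rewrite sum_nat_const muln1 cardsC1 => Hle.
apply: (@arith2 #|F| #|H| q7 _ Hle); rewrite Hm; exact: leq_divM.
Qed.

Lemma mono_inj (s : 'S_3) (a : 'I_3 -> F) : (forall i, a i != 0) ->
  injective (monomial_map s a).
Proof.
move=> an x y /rowP E; apply/rowP => l.
have := E (s^-1 l)%g; rewrite !mxE permKV; exact: mulfI.
Qed.

Lemma nzk u (k : 'I_3) : u != 0 -> (forall l, l != k -> u 0 l = 0) -> u 0 k != 0.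
Proof.
move=> nz Hu; apply: contra nz => /eqP uk; apply/eqP/rowP => l; rewrite mxE.
by case: (eqVneq l k) => [->|lk]; [exact: uk| exact: Hu].
Qed.

Lemma mk_form1 (H : {set 'rV[F]_3}) h1 u0 u1 u2 : h1 \in H ->
  (forall l, h1 0 l != 0) -> u0 \in H -> u1 \in H -> u2 \in H ->
  u0 0 i0 = 0 -> u1 0 i1 = 0 -> u2 0 i2 = 0 -> uniq [:: u0; u1; u2] ->
  exists H' : {set 'rV[F]_3}, Fq_equivalent H H' /\ (form1 H' \/ form2 H').
Proof.
move=> h1H nz u0H u1H u2H z0 z1 z2 U.
pose s : 'S_3 := 1%g; pose a l := (h1 0 (s l))^-1.
have an l : a l != 0 by rewrite invr_eq0.
pose M := monomial_map s a.
exists [set M h | h in H]; split; first by exists s, a.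
left; exists (M h1), (M u0), (M u1), (M u2); split.
- by split; apply: imset_f.
- have := map_inj_uniq (mono_inj s a an) [:: h1; u0; u1; u2]; rewrite /= => ->.
  move: U; rewrite /= !inE => /andP[-> /andP[-> _]]; rewrite !andbT.
  have ne (u : 'rV[F]_3) j : u 0 j = 0 -> (h1 == u) = false.
    by move=> uj; apply/negbTE/eqP => E; move: (nz j); rewrite E uj eqxx.
  by rewrite (ne _ _ z0) (ne _ _ z1) (ne _ _ z2).
- by apply/rowP => l; rewrite !mxE /a perm1 mulVf.
- by rewrite /M !mxE !perm1 e0 e2 e1 z0 z1 z2 !mulr0.
Qed.

Lemma mk_form2 (H : {set 'rV[F]_3}) h1 u v (k : 'I_3) : h1 \in H ->
  (forall l, h1 0 l != 0) -> u \in H -> v \in H -> u != 0 ->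
  (forall l, l != k -> u 0 l = 0) -> v 0 k = 0 ->
  exists H' : {set 'rV[F]_3}, Fq_equivalent H H' /\ (form1 H' \/ form2 H').
Proof.
move=> h1H nz uH vH unz Hu vk.
pose s : 'S_3 := tperm i0 k; pose a l := (h1 0 (s l))^-1.
have an l : a l != 0 by rewrite invr_eq0.
pose M := monomial_map s a.
have s0 : s i0 = k by rewrite tpermL.
have sk l : l != i0 -> s l != k.
  by move=> l0; rewrite -s0 (inj_eq perm_inj).
have us l : l != i0 -> u 0 (s l) = 0 by move=> l0; apply: Hu; apply: sk.
exists [set M h | h in H]; split; first by exists s, a.
right; exists (M h1), (M v), (M u); split.
- by split; apply: imset_f.
- have := map_inj_uniq (mono_inj s a an) [:: h1; v; u]; rewrite /= => ->.
  rewrite /= !inE andbT.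
  have ne (w : 'rV[F]_3) j : w 0 j = 0 -> (h1 == w) = false.
    by move=> wj; apply/negbTE/eqP => E; move: (nz j); rewrite E wj eqxx.
  rewrite (ne _ _ vk) (ne _ (s i1) (us i1 isT)) /=.
  apply/eqP => E; move: (nzk u k unz Hu); rewrite -E vk eqxx.
  by [].
- by apply/rowP => l; rewrite !mxE /a mulVf.
- by rewrite /M !mxE e0 e2 e1 s0 vk (us i1 isT) (us i2 isT) !mulr0.
Qed.

End Aux.

Theorem theorem18 (F : finFieldType) (H : {set 'rV[F]_3}) :
  (7 <= #|F|)%N ->
  #|H| = ((#|F| + 2) %/ 2)%N ->
  short_covering H ->
  [/\ (exists2 h, h \in H & weight h = 3%N),
      (forall j : 'I_3, exists2 h, h \in H & h 0 j = 0) &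
      (exists H' : {set 'rV[F]_3}, Fq_equivalent H H' /\ (form1 H' \/ form2 H'))].
Proof.
move=> q7 Hm Hc.
have [h1 h1H w3] := part1 F H q7 Hm Hc.
have nz l : h1 0 l != 0 := w3_nz F h1 l w3.
have [u0 u0H /andP[nz0 /eqP z0]] := part2 F H i0 i1 i2 isT isT isT q7 Hm Hc.
have [u1 u1H /andP[nz1 /eqP z1]] := part2 F H i1 i0 i2 isT isT isT q7 Hm Hc.
have [u2 u2H /andP[nz2 /eqP z2]] := part2 F H i2 i0 i1 isT isT isT q7 Hm Hc.
split.
- by exists h1.
- by move=> j; case: (ord3 j) => [->|[->|->]]; [exists u0|exists u1|exists u2].
case: (eqVneq u0 u1) => [E01|n01].
  apply: (@mk_form2 F H h1 u0 u2 i2 h1H nz u0H u2H nz0 _ z2).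
  move=> l; case: (ord3 l) => [->|[->|->]] Hl;
    [exact: z0 | by rewrite E01 | by rewrite eqxx in Hl].
case: (eqVneq u0 u2) => [E02|n02].
  apply: (@mk_form2 F H h1 u0 u1 i1 h1H nz u0H u1H nz0 _ z1).
  move=> l; case: (ord3 l) => [->|[->|->]] Hl;
    [exact: z0 | by rewrite eqxx in Hl | by rewrite E02].
case: (eqVneq u1 u2) => [E12|n12].
  apply: (@mk_form2 F H h1 u1 u0 i0 h1H nz u1H u0H nz1 _ z0).
  move=> l; case: (ord3 l) => [->|[->|->]] Hl;
    [by rewrite eqxx in Hl | exact: z1 | by rewrite E12].
apply: (@mk_form1 F H h1 u0 u1 u2 h1H nz u0H u1H u2H z0 z1 z2).
by rewrite /= !inE negb_or n01 n02 n12.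
Qed.
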